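(* Let $(S,T,\alpha,\beta)$ be a matched product system of left inverse semi-braces. Then for all $a\in S$ and $u\in T$: $$\lambda_a\,\alpha_{\beta_a^{-1}(u)}=\alpha_u\,\lambda_{\alpha_u^{-1}(a)},\qquad \lambda_u\,\beta_{\alpha_u^{-1}(a)}=\beta_a\,\lambda_{\beta_a^{-1}(u)}$$ as maps $S\to S$ and $T\to T$ respectively.
   Context: An inverse semigroup is a semigroup $(S,\cdot)$ in which for each $a$ there is a unique $a^{-1}$ with $aa^{-1}a=a$, $a^{-1}aa^{-1}=a^{-1}$. A left inverse semi-brace is a triple $(S,+,\cdot)$ with $(S,+)$ a semigroup, $(S,\cdot)$ an inverse semigroup and $a(b+c)=ab+a(a^{-1}+c)$ for all $a,b,c$; in it set $\lambda_a(b)=a(a^{-1}+b)$ (similarly in $T$). A matched product system of left inverse semi-braces is a quadruple $(S,T,\alpha,\beta)$ where $S,T$ are left inverse semi-braces, $\alpha:T\to\mathrm{Aut}(S,+)$ is a homomorphism of inverse semigroups from $(T,\cdot)$ into the automorphism group of $(S,+)$, $\beta:S\to\mathrm{Aut}(T,+)$ is a homomorphism of inverse semigroups from $(S,\cdot)$ into the automorphism group of $(T,+)$ (write $\alpha_u=\alpha(u)$, $\beta_a=\beta(a)$, and $\alpha_u^{-1},\beta_a^{-1}$ for the inverse maps), such that for all $a,b\in S$, $u,v\in T$: $\alpha_u(\alpha_u^{-1}(a)\,b)=a\,\alpha_{\beta_a^{-1}(u)}(b)$ and $\beta_a(\beta_a^{-1}(u)\,v)=u\,\beta_{\alpha_u^{-1}(a)}(v)$;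 and if $\alpha_u(\alpha_u^{-1}(a)\,a)=a$ and $\beta_a(\beta_a^{-1}(u)\,u)=u$, then $\alpha_u(a)=a$ and $\beta_a(u)=u$. *)

(* Defs.v *)
Record InvSemiBrace := {
  car :> Type;
  add : car -> car -> car;
  mul : car -> car -> car;
  inv : car -> car;
  add_assoc : forall a b c, add a (add b c) = add (add a b) c;
  mul_assoc : forall a b c, mul a (mul b c) = mul (mul a b) c;
  inv_r : forall a, mul (mul a (inv a)) a = a;
  inv_l : forall a, mul (mul (inv a) a) (inv a) = inv a;
  inv_uniq : forall a b, mul (mul a b) a = a -> mul (mul b a) b = b -> b = inv a;
  brace : forall a b c, mul a (add b c) = add (mul a b) (mul a (add (inv a) c))
}.

Definition lam (B : InvSemiBrace) (a b : B) : B := mul B a (add B (inv B a) b).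

Record AutAdd (B : InvSemiBrace) := {
  afun : B -> B;
  ainv : B -> B;
  afunK : forall x, ainv (afun x) = x;
  ainvK : forall x, afun (ainv x) = x;
  afun_add : forall x y, afun (add B x y) = add B (afun x) (afun y)
}.
Arguments afun {B} _ _.
Arguments ainv {B} _ _.

(* Matched product system (S,T,alpha,beta).  alpha_u = afun (alpha u),
   alpha_u^{-1} = ainv (alpha u). *)
Definition matched_product_system (S T : InvSemiBrace)
  (alpha : T -> AutAdd S) (beta : S -> AutAdd T) : Prop :=
  (forall (u v : T) (x : S),
      afun (alpha (mul T u v)) x = afun (alpha u) (afun (alpha v) x)) /\
  (forall (a b : S) (y : T),
      afun (beta (mul S a b)) y = afun (beta a) (afun (beta b) y)) /\
  (forall (a b : S) (u : T),
      afun (alpha u) (mul S (ainv (alpha u) a) b)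
      = mul S a (afun (alpha (ainv (beta a) u)) b)) /\
  (forall (a : S) (u v : T),
      afun (beta a) (mul T (ainv (beta a) u) v)
      = mul T u (afun (beta (ainv (alpha u) a)) v)) /\
  (forall (a : S) (u : T),
      afun (alpha u) (mul S (ainv (alpha u) a) a) = a ->
      afun (beta a) (mul T (ainv (beta a) u) u) = u ->
      afun (alpha u) a = a /\ afun (beta a) u = u).

(* Main.v *)
Require Import Defs.

Section Part.
Variables (S T : InvSemiBrace) (alpha : T -> AutAdd S) (beta : S -> AutAdd T).
Hypothesis Ha : forall (u v : T) (x : S),
      afun (alpha (mul T u v)) x = afun (alpha u) (afun (alpha v) x).
Hypothesis Hb : forall (a b : S) (y : T),
      afun (beta (mul S a b)) y = afun (beta a) (afun (beta b) y).
Hypothesis H3 : forall (a b : S) (u : T),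
      afun (alpha u) (mul S (ainv (alpha u) a) b)
      = mul S a (afun (alpha (ainv (beta a) u)) b).

Lemma ainv_id (B : InvSemiBrace) (f : AutAdd B) :
  (forall x, afun f x = x) -> forall x, ainv f x = x.
Proof. intros h x. rewrite <- (h (ainv f x)). apply ainvK. Qed.

Lemma afun_inj (B : InvSemiBrace) (f : AutAdd B) x y : afun f x = afun f y -> x = y.
Proof. intros h. rewrite <- (afunK _ f x), <- (afunK _ f y), h. reflexivity. Qed.

Lemma beta_idem f : mul S f f = f -> forall y, afun (beta f) y = y.
Proof. intros hf y. apply (afun_inj _ (beta f)). rewrite <- Hb, hf. reflexivity. Qed.

Lemma alpha_inv u x : afun (alpha (inv T u)) (afun (alpha u) x) = x.
Proof.
  apply (afun_inj _ (alpha u)). rewrite <- Ha, <- Ha, inv_r. reflexivity.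
Qed.

Lemma ainv_alpha_idem u f : mul S f f = f ->
  mul S (ainv (alpha u) f) (ainv (alpha u) f) = ainv (alpha u) f.
Proof.
  intros hf. apply (afun_inj _ (alpha u)). rewrite H3.
  rewrite (ainv_id _ _ (beta_idem f hf)). rewrite !ainvK. exact hf.
Qed.

Lemma alpha_idem_img u f : mul S f f = f ->
  mul S (afun (alpha u) f) (afun (alpha u) f) = afun (alpha u) f.
Proof.
  intros hf.
  assert (E : afun (alpha u) f = ainv (alpha (inv T u)) f).
  { apply (afun_inj _ (alpha (inv T u))). rewrite ainvK. apply alpha_inv. }
  rewrite E. apply ainv_alpha_idem. exact hf.
Qed.

Lemma mulA v x c : mul S (afun (alpha v) x) c =
  afun (alpha v) (mul S x (ainv (alpha (ainv (beta (afun (alpha v) x)) v)) c)).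
Proof.
  pose proof (H3 (afun (alpha v) x) (ainv (alpha (ainv (beta (afun (alpha v) x)) v)) c) v) as h.
  rewrite afunK, ainvK in h. symmetry. exact h.
Qed.

Lemma idem1 (B : InvSemiBrace) (a : B) :
  mul B (mul B a (inv B a)) (mul B a (inv B a)) = mul B a (inv B a).
Proof. rewrite mul_assoc, inv_r. reflexivity. Qed.

Lemma idem2 (B : InvSemiBrace) (a : B) :
  mul B (mul B (inv B a) a) (mul B (inv B a) a) = mul B (inv B a) a.
Proof. rewrite mul_assoc, inv_l. reflexivity. Qed.

Lemma w_inv a u :
  afun (alpha (ainv (beta a) u)) (inv S (ainv (alpha u) a)) = inv S a.
Proof.
  set (a' := ainv (alpha u) a). set (u' := ainv (beta a) u).
  set (w := afun (alpha u') (inv S a')).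
  assert (Haw : mul S a w = afun (alpha u) (mul S a' (inv S a'))).
  { unfold w, u', a'. rewrite H3. reflexivity. }
  assert (He : mul S (mul S a w) (mul S a w) = mul S a w).
  { rewrite Haw. apply alpha_idem_img. apply idem1. }
  apply inv_uniq.
  - rewrite Haw, mulA.
    rewrite <- Haw.
    rewrite (ainv_id _ _ (beta_idem _ He)).
    fold a'. rewrite inv_r.
    unfold a'. apply ainvK.
  - assert (Ht : ainv (beta w) u' = u).
    { apply (afun_inj _ (beta w)). rewrite ainvK.
      apply (afun_inj _ (beta a)). unfold u'. rewrite ainvK.
      rewrite <- Hb. symmetry. apply beta_idem. exact He. }
    change (mul S (mul S (afun (alpha u') (inv S a')) a) w = w).
    rewrite (mulA u' (inv S a') a). fold w. rewrite Ht. fold a'.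
    assert (Hf := alpha_idem_img u' _ (idem2 _ a')).
    rewrite mulA, (ainv_id _ _ (beta_idem _ Hf)).
    unfold w. rewrite afunK. rewrite inv_l. reflexivity.
Qed.

Lemma part1 a u x :
  lam S a (afun (alpha (ainv (beta a) u)) x)
  = afun (alpha u) (lam S (ainv (alpha u) a) x).
Proof.
  unfold lam. rewrite H3, afun_add, w_inv. reflexivity.
Qed.
End Part.

Theorem lemma26 (S T : InvSemiBrace) (alpha : T -> AutAdd S) (beta : S -> AutAdd T)
  (H : matched_product_system S T alpha beta) :
  forall (a : S) (u : T),
    (forall x : S,
        lam S a (afun (alpha (ainv (beta a) u)) x)
        = afun (alpha u) (lam S (ainv (alpha u) a) x)) /\
    (forall y : T,
        lam T u (afun (beta (ainv (alpha u) a)) y)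
        = afun (beta a) (lam T (ainv (beta a) u) y)).
Proof.
  destruct H as [H1 [H2 [H3 [H4 H5]]]].
  intros a u. split.
  - intros x. apply part1; assumption.
  - intros y. exact (part1 T S beta alpha H2 H1 (fun u v a => H4 a u v) u a y).
Qed.
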